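(* Let $G$ be a graph with vertex set $[n]$. Distinct $G$-reduced noncrossing trees on $[n]$ have distinct signatures.
   Context: A graph on $[n]$ is noncrossing if it has no two edges $\overline{ac},\overline{bd}$ with $a<b<c<d$. A noncrossing tree $T$ on $[n]$ is $G$-reduced if $T\subset G$ and there do not exist $1\le i_1<i_2<\dots<i_m\le n$ such that $\overline{i_1i_m}\in T$, $\overline{i_{j-1}i_j}\in T$ for all $1<j<m$, $\overline{i_{m-1}i_m}\in G$, and $T\cup\overline{i_{m-1}i_m}$ is noncrossing. The signature of a noncrossing tree $T$ on $[n]$ is the sequence $s(T)=(s_1,\dots,s_n)$ defined by $s_1=1$ and, for $i>1$: $s_i=s_j$ where $j<i$ is the minimum vertex with $\overline{ji}\in T$, if such $j$ exists; otherwise $s_i=s_{i-1}+1$. *)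

(* Defs.v *)
(* Vertices [n] = {1,..,n} are modelled by 'I_n = {0,..,n-1}
   (order-preserving shift by one). An (undirected, simple) graph on [n] is a
   set of pairs (a,b) with a < b; the pair (a,b) is the edge {a,b}. *)
From mathcomp Require Import all_boot.
Set Implicit Arguments.
Unset Strict Implicit.
Unset Printing Implicit Defensive.

Section Defs.
Variable n : nat.
Notation V := 'I_n.

Definition graph_wf (E : {set V * V}) : bool :=
  [forall e in E, e.1 < e.2].

Definition adj (E : {set V * V}) : rel V :=
  fun a b => ((a, b) \in E) || ((b, a) \in E).

Definition connected (E : {set V * V}) : bool :=
  [forall a : V, forall b : V, connect (adj E) a b].

Definition is_tree (T : {set V * V}) : bool :=
  [&& graph_wf T, connected T &
      [forall e in T, ~~ connect (adj (T :\ e)) e.1 e.2]].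

Definition noncrossing (E : {set V * V}) : bool :=
  [forall e in E, forall f in E,
     ~~ [&& e.1 < f.1, f.1 < e.2 & e.2 < f.2]].

Definition noncrossing_tree (T : {set V * V}) : bool :=
  is_tree T && noncrossing T.

(* G-reduced: T \subset G and there is no increasing sequence
   i_1 < ... < i_m (m >= 3) with i_1 i_m in T, i_{j-1} i_j in T for 1<j<m,
   i_{m-1} i_m in G, and T + i_{m-1} i_m noncrossing. *)
Definition reducing_seq (G T : {set V * V}) (s : seq V) : Prop :=
  exists (x : V) (mid : seq V) (y z : V),
    [/\ s = x :: rcons (rcons mid y) z,
        sorted (fun a b : V => a < b) s,
        (x, z) \in T &
        [/\
        path (fun a b : V => (a, b) \in T) x (rcons mid y),
        (y, z) \in G &
        noncrossing (T :|: [set (y, z)])]].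

Definition G_reduced (G T : {set V * V}) : Prop :=
  T \subset G /\ ~ (exists s : seq V, reducing_seq G T s).

(* signature, 0-based positions: value at position k (vertex k+1) *)
Definition edgeN (T : {set V * V}) (a b : nat) : bool :=
  [exists e in T, (val e.1 == a) && (val e.2 == b)].

Fixpoint sig_seq (T : {set V * V}) (k : nat) : seq nat :=
  match k with
  | 0 => [::]
  | k'.+1 =>
      let s := sig_seq T k' in
      rcons s
        (if k' == 0 then 1
         else let j := find (fun j => edgeN T j k') (iota 0 k') in
              if j < k' then nth 0 s j else (last 0 s).+1)
  end.

Definition signature (T : {set V * V}) : seq nat := sig_seq T n.

End Defs.

(* Main.v *)
Require Import Defs.
From mathcomp Require Import all_boot.
From mathcomp Require Import zify.

Set Implicit Arguments.
Unset Strict Implicit.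
Unset Printing Implicit Defensive.

Definition inb (x y w : nat) : bool := (x < w) != (y < w).
Definition sepb x y u v := inb x y u != inb x y v.

Lemma sep_split2 x y u u1 v : sepb x y u v = ((sepb x y u u1) != (sepb x y u1 v)).
Proof. rewrite /sepb. by case: (inb x y u); case: (inb x y u1); case: (inb x y v). Qed.

Lemma wfP n (E : {set 'I_n * 'I_n}) : graph_wf E -> forall e, e \in E -> e.1 < e.2.
Proof. by move=> /forallP h e he; have := h e; rewrite he. Qed.

Lemma ncP n (E : {set 'I_n * 'I_n}) : noncrossing E ->
  forall e f, e \in E -> f \in E -> ~~ [&& e.1 < f.1, f.1 < e.2 & e.2 < f.2].
Proof.
move=> /forallP h e f he hf; have := h e; rewrite he /= => /forallP /(_ f).
by rewrite hf.
Qed.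

Lemma adj_sym n (E : {set 'I_n * 'I_n}) : symmetric (adj E).
Proof. by move=> x y; rewrite /adj orbC. Qed.

Lemma JL0 n (E : {set 'I_n * 'I_n}) (x x1 u u1 : 'I_n) :
  graph_wf E -> noncrossing E -> adj E x x1 -> adj E u u1 ->
  x != u -> x != u1 -> x1 != u -> x1 != u1 -> ~~ sepb x x1 u u1.
Proof.
move=> wf nc hx hu; rewrite -!val_eqE /=.
have W := wfP wf; have N := ncP nc.
case/orP: hx => hx; case/orP: hu => hu;
move: (N _ _ hx hu) (N _ _ hu hx) (W _ hx) (W _ hu) => /=;
rewrite /sepb /inb; lia.
Qed.

Lemma JL1 n (E : {set 'I_n * 'I_n}) (x x1 : 'I_n) (q : seq 'I_n) (u : 'I_n) :
  graph_wf E -> noncrossing E -> adj E x x1 -> path (adj E) u q ->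
  x \notin u :: q -> x1 \notin u :: q -> ~~ sepb x x1 u (last u q).
Proof.
move=> wf nc exx1; elim: q u => [|u1 q IH] u /=.
  by move=> _ _ _; rewrite /sepb eqxx.
case/andP=> huu1 hp; rewrite !inE !negb_or => /and3P[xu xu1 xq] /and3P[x1u x1u1 x1q].
rewrite (sep_split2 _ _ _ u1) (negbTE (JL0 wf nc exx1 huu1 xu xu1 x1u x1u1)).
rewrite (negbTE (IH u1 hp _ _)) //; by rewrite inE negb_or ?xu1 ?x1u1.
Qed.

Lemma incr n (E : {set 'I_n * 'I_n}) (p : seq 'I_n) (x : 'I_n) :
  graph_wf E -> noncrossing E -> path (adj E) x p -> uniq (x :: p) ->
  (forall w, w \in p -> (x < w) && (w <= last x p)) ->
  sorted (fun a b : 'I_n => a < b) (x :: p).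
Proof.
move=> wf nc; elim: p x => [|x1 p IH] x //= /andP[hx hp] /andP[xnin up] hr.
have /andP[xx1 x1l] := hr x1 (mem_head _ _).
rewrite xx1 /=.
apply: (IH x1 hp up) => w wp.
have := hr w; rewrite inE wp orbT => /(_ isT) /andP[xw ->]; rewrite andbT.
case/andP: up => x1p _.
have [p1 [p2 Ep]] : exists p1 p2, p = p1 ++ w :: p2.
  by case/splitPr: wp => p1 p2; exists p1, p2.
have wx1 : w != x1 by apply: contraNneq x1p => <-.
move: wx1; rewrite -val_eqE /= => wx1.
rewrite ltnNge; apply/negP => wlt.
have hp2 : path (adj E) w p2 by move: hp; rewrite Ep cat_path /= => /and3P[].
have Hl : last x1 p = last w p2 by rewrite Ep last_cat.
have lin : last w p2 \in p by rewrite Ep mem_cat mem_last orbT.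
have x1l' : x1 != last w p2 by apply: contraNneq x1p => ->.
have := JL1 wf nc hx hp2.
rewrite -Hl.
have xnin' : x \notin w :: p2.
  by apply: contra xnin; rewrite Ep => h; rewrite inE mem_cat h !orbT.
have x1nin' : x1 \notin w :: p2.
  by apply: contra x1p; rewrite Ep => h; rewrite mem_cat h orbT.
move=> /(_ xnin' x1nin').
move: x1l x1l'; rewrite Hl -val_eqE /=.
rewrite /sepb /inb; lia.
Qed.

Definition adjF n (T : {set 'I_n * 'I_n}) (k : nat) : rel 'I_n :=
  fun x y => [&& adj T x y, x < k & y < k].
Definition connF n (T : {set 'I_n * 'I_n}) (k : nat) := connect (adjF T k).

Lemma adjF_sym n (T : {set 'I_n * 'I_n}) k : symmetric (adjF T k).
Proof. by move=> x y; rewrite /adjF adj_sym; case: (x < k); case: (y < k); rewrite /= ?andbT ?andbF. Qed.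

Lemma connF_sym n (T : {set 'I_n * 'I_n}) k x y : connF T k x y = connF T k y x.
Proof. exact: (sym_connect_sym (adjF_sym T k)). Qed.

Definition agree n (T1 T2 : {set 'I_n * 'I_n}) (k : nat) :=
  forall u v : 'I_n, v < k -> ((u, v) \in T1) = ((u, v) \in T2).

Lemma agree_sym n (T1 T2 : {set 'I_n * 'I_n}) k : agree T1 T2 k -> agree T2 T1 k.
Proof. by move=> h u v vk; rewrite h. Qed.

Lemma adjF_agree n (T1 T2 : {set 'I_n * 'I_n}) k : agree T1 T2 k -> adjF T1 k =2 adjF T2 k.
Proof.
move=> h x y; rewrite /adjF; case xk: (x < k); case yk: (y < k); rewrite ?andbF //.
by rewrite /adj !h.
Qed.

Lemma connF_agree n (T1 T2 : {set 'I_n * 'I_n}) k : agree T1 T2 k -> connF T1 k =2 connF T2 k.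
Proof. by move=> h; apply: eq_connect; apply: adjF_agree. Qed.

Lemma prefix_exit n (T : {set 'I_n * 'I_n}) (k : nat) (p : seq 'I_n) (x : 'I_n) :
  x < k -> path (adj T) x p -> k <= last x p ->
  exists r w, [/\ path (adj T) x (rcons r w), all (fun y : 'I_n => y < k) (x :: r) & k <= w].
Proof.
elim: p x => [|x1 p IH] x /= xk; first by rewrite leqNgt xk.
case/andP=> hx hp hl.
case: (leqP k x1) => kx1.
  by exists [::], x1; rewrite /= hx xk kx1.
have [r [w [h1 h2 h3]]] := IH x1 kx1 hp hl.
by exists (x1 :: r), w; rewrite /= hx h1 xk.
Qed.

Lemma path_connF n (T : {set 'I_n * 'I_n}) (k : nat) (r : seq 'I_n) (x : 'I_n) :
  path (adj T) x r -> all (fun y : 'I_n => y < k) (x :: r) ->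
  forall y, y \in x :: r -> connF T k x y.
Proof.
elim: r x => [|x1 r IH] x /=.
  by move=> _ _ y; rewrite inE => /eqP ->; apply: connect0.
case/andP=> hx hp /and3P[xk x1k ar] y; rewrite inE => /orP[/eqP -> | yin].
  exact: connect0.
apply: connect_trans (IH x1 hp _ y yin); last by rewrite /= x1k.
by apply: connect1; rewrite /adjF hx xk x1k.
Qed.

Lemma lemL n (T : {set 'I_n * 'I_n}) (k c b : 'I_n) :
  graph_wf T -> noncrossing T -> connected T -> (c, k) \in T -> c < b -> b < k ->
  exists2 a, (a, k) \in T & connF T k b a.
Proof.
move=> wf nc con ck cb bk.
have : connect (adj T) b k by move/forallP: con => /(_ b) /forallP /(_ k).
case/connectP => p hp hl.
have hl' : k <= last b p by rewrite -hl.
have [r [w [h1 h2 h3]]] := prefix_exit bk hp hl'.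
move: h1; rewrite rcons_path => /andP[hr hw].
case: (boolP (c \in b :: r)) => cin.
  by exists c; [exact: ck | exact: path_connF hr h2 c cin].
case: (ltngtP k w) => kw; last first.
- have wk : w = k by apply: val_inj.
  exists (last b r); last exact: path_connF hr h2 _ (mem_last b r).
  have lk : last b r < k by move/allP: h2; apply; apply: mem_last.
  move: hw; rewrite wk /adj => /orP[//|hk].
  by have := wfP wf hk; rewrite /= ltnNge ltnW.
- by move: kw; rewrite ltnNge h3.
- have Hck : adj T c k by rewrite /adj ck.
  have hp2 : path (adj T) b (rcons r w) by rewrite rcons_path hr hw.
  have := JL1 wf nc Hck hp2.
  rewrite last_rcons.
  have cnin : c \notin b :: rcons r w.
    apply/negP; rewrite -cats1 -cat_cons mem_cat (negbTE cin) /= mem_seq1 => /eqP cw.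
    move: kw; rewrite -cw; move: (ltn_trans cb bk); lia.
  have knin : k \notin b :: rcons r w.
    apply/negP; rewrite -cats1 -cat_cons mem_cat mem_seq1 => /orP[kin | /eqP kw'].
      by move/allP: h2 => /(_ k kin); rewrite ltnn.
    by move: kw; rewrite kw' ltnn.
  move=> /(_ cnin knin); rewrite /sepb /inb; move: cb bk kw; lia.
Qed.

Lemma pathF_lt n (T : {set 'I_n * 'I_n}) (k : nat) (p : seq 'I_n) (x : 'I_n) :
  path (adjF T k) x p -> forall w, w \in p -> w < k.
Proof.
elim: p x => [|x1 p IH] x //= /andP[/and3P[_ _ x1k] hp] w.
by rewrite inE => /orP[/eqP -> // | wp]; apply: IH hp w wp.
Qed.

Lemma adjF_adj n (T : {set 'I_n * 'I_n}) k : subrel (adjF T k) (adj T).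
Proof. by move=> x y /and3P[]. Qed.

Lemma sep_ar1 (a b k w : nat) : w <= a -> w != a -> a < b -> b < k -> sepb a k w b.
Proof. rewrite /sepb /inb => h1 h2 h3 h4; lia. Qed.
Lemma sep_ar2 (a b k w : nat) : a < b -> b < w -> w < k -> sepb b k a w.
Proof. rewrite /sepb /inb => h1 h2 h3; lia. Qed.

Lemma reduce n (G T1 T2 : {set 'I_n * 'I_n}) (k a b : 'I_n) :
  graph_wf T1 -> noncrossing T1 -> graph_wf T2 -> noncrossing T2 ->
  agree T1 T2 k ->
  (a, k) \in T1 -> (b, k) \in G -> (b, k) \in T2 -> a < b -> connF T1 k a b ->
  exists s, reducing_seq G T1 s.
Proof.
move=> wf1 nc1 wf2 nc2 ag ak bG bk ab.
have akl : a < k by have := wfP wf1 ak.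
have bkl : b < k by have := wfP wf2 bk.
move=> Hc.
have [p [hp up Eb]] : exists p, [/\ path (adjF T1 k) a p, uniq (a :: p) & last a p = b].
  case/connectP: Hc => p0 hp0 ->.
  by case: (shortenP hp0) => p hp up _; exists p.
have ltk := pathF_lt hp.
have hp1 : path (adj T1) a p by apply: sub_path hp; apply: adjF_adj.
have hp2 : path (adj T2) a p.
  by apply: sub_path hp => x y; rewrite (adjF_agree ag); apply: adjF_adj.
have anp : a \notin p by case/andP: up.
have range : forall w, w \in p -> (a < w) && (w <= last a p).
  move=> w wp.
  have [p1 [p2 Ep]] : exists p1 p2, p = p1 ++ w :: p2.
    by case/splitPr: wp => p1 p2; exists p1, p2.
  have Hl : b = last w p2 by rewrite -Eb Ep last_cat.
  have wa : w != a by apply: contraNneq anp => <-.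
  move: wa; rewrite -val_eqE /= => wa.
  rewrite Eb; apply/andP; split.
    rewrite ltnNge; apply/negP => wle.
    have hpw : path (adj T1) w p2 by move: hp1; rewrite Ep cat_path /= => /and3P[].
    have Hak : adj T1 a k by rewrite /adj ak.
    have := JL1 wf1 nc1 Hak hpw; rewrite -Hl.
    have anin : a \notin w :: p2.
      by apply: contra anp => h; rewrite Ep mem_cat h orbT.
    have knin : k \notin w :: p2.
      apply/negP => h; have : k \in p by rewrite Ep mem_cat h orbT.
      by move/ltk; rewrite ltnn.
    move=> /(_ anin knin); rewrite Hl in ab bkl *.
    by rewrite (sep_ar1 wle wa ab bkl).
  rewrite leqNgt; apply/negP => bw.
  have hpw : path (adj T2) a (rcons p1 w) by move: hp2; rewrite Ep -cat_rcons cat_path => /andP[].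
  have Hbk : adj T2 b k by rewrite /adj bk.
  have := JL1 wf2 nc2 Hbk hpw; rewrite last_rcons.
  have bin : b \in p2.
    have : b \in w :: p2 by rewrite Hl mem_last.
    rewrite inE => /orP[/eqP bw'|//].
    by move: bw; rewrite bw' ltnn.
  have bnin : b \notin a :: rcons p1 w.
    move: up; rewrite Ep -cat_rcons -cat_cons cat_uniq => /and3P[_ /hasPn h _].
    exact: h.
  have knin : k \notin a :: rcons p1 w.
    rewrite inE negb_or; apply/andP; split.
      by rewrite -val_eqE /= neq_ltn akl orbT.
    apply/negP => h; have : k \in p by rewrite Ep -cat_rcons mem_cat h.
    by move/ltk; rewrite ltnn.
  have wk : w < k by apply: ltk.
  by move=> /(_ bnin knin); rewrite (sep_ar2 ab bw wk).
have srt := incr wf1 nc1 hp1 up range.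
case/lastP: p => [|mid y] in hp hp1 hp2 up range srt anp ltk Eb *.
  by move: ab; rewrite -Eb /= ltnn.
move: Eb; rewrite last_rcons => Eb.
rewrite -Eb in ab bG bk bkl *.
exists (a :: rcons (rcons mid y) k), a, mid, y, k; split => //.
- by rewrite /= rcons_path last_rcons bkl andbT.
- split => //.
  + have : path [rel u v | adj T1 u v && (u < v)] a (rcons mid y).
      by rewrite path_relI hp1.
    apply: sub_path => u v /andP[/orP[//|hvu] uv].
    by have := wfP wf1 hvu; rewrite /= ltnNge ltnW.
  + apply/forallP => e; apply/implyP; rewrite in_setU in_set1 => he.
    apply/forallP => f; apply/implyP; rewrite in_setU in_set1 => hf.
    case/orP: he => [he | /eqP ->]; case/orP: hf => [hf | /eqP ->].
    * exact: ncP nc1 _ _ he hf.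
    * apply/negP => /and3P[h1 h2 h3].
      have he2 : e \in T2 by move: he; case: e h1 h2 h3 => e1 e2 /= h1 h2 h3; rewrite ag.
      by have := ncP nc2 he2 bk; rewrite /= h1 h2 h3.
    * apply/negP => /= /and3P[h1 h2 h3].
      have := ncP nc1 ak hf; rewrite /= h2 h3 andbT.
      by rewrite (ltn_trans ab h1).
    * by rewrite /= ltnn.
Qed.

Definition S n (T : {set 'I_n * 'I_n}) (v : nat) := nth 0 (sig_seq T v.+1) v.

Lemma size_sig n (T : {set 'I_n * 'I_n}) m : size (sig_seq T m) = m.
Proof. by elim: m => //= m IH; rewrite size_rcons IH. Qed.

Lemma nth_sig n (T : {set 'I_n * 'I_n}) m j : j < m -> nth 0 (sig_seq T m) j = S T j.
Proof.
elim: m => // m IH; rewrite ltnS leq_eqVlt => /orP[/eqP -> // | jm].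
by rewrite /= nth_rcons size_sig jm IH.
Qed.

Lemma S_rec n (T : {set 'I_n * 'I_n}) v :
  S T v = if v == 0 then 1 else
    let j := find (fun j => edgeN T j v) (iota 0 v) in
    if j < v then S T j else (S T v.-1).+1.
Proof.
rewrite /S /= nth_rcons size_sig ltnn eqxx.
case: (v =P 0) => // /eqP v0 /=.
case: ifP => jv; first by rewrite nth_sig.
rewrite -nth_last size_sig nth_sig //; by case: v v0 {jv}.
Qed.

Lemma edgeN_ord n (T : {set 'I_n * 'I_n}) (u v : 'I_n) : edgeN T u v = ((u, v) \in T).
Proof.
rewrite /edgeN; apply/existsP/idP => [[[e1 e2]] /andP[he /andP[/eqP h1 /eqP h2]] | h].
  have -> : u = e1 by apply: val_inj; rewrite /= -h1.
  have -> : v = e2 by apply: val_inj; rewrite /= -h2.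
  exact: he.
by exists (u, v); rewrite h !eqxx.
Qed.

Lemma edgeN_ex n (T : {set 'I_n * 'I_n}) (j : nat) (v : 'I_n) :
  edgeN T j v -> exists u : 'I_n, val u = j /\ (u, v) \in T.
Proof.
case/existsP => [[e1 e2]] /andP[he /andP[/eqP h1 /eqP h2]].
have -> : v = e2 by apply: val_inj; rewrite /= -h2.
by exists e1.
Qed.

Lemma S_min n (T : {set 'I_n * 'I_n}) (p v : 'I_n) :
  graph_wf T -> (p, v) \in T -> (forall u : 'I_n, (u, v) \in T -> p <= u) ->
  S T v = S T p.
Proof.
move=> wf pv pmin.
have pvl : p < v by have := wfP wf pv.
rewrite S_rec; have -> : (v == 0 :> nat) = false by case: (nat_of_ord v) pvl.
set P := fun j => edgeN T j v.
have hasP : has P (iota 0 v).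
  by apply/hasP; exists (nat_of_ord p); rewrite ?mem_iota ?pvl //= /P edgeN_ord.
have jv : find P (iota 0 v) < v by rewrite -[X in _ < X](size_iota 0 v) -has_find.
rewrite /= jv.
have -> : find P (iota 0 v) = p => //.
apply/eqP; rewrite eqn_leq; apply/andP; split.
  rewrite leqNgt; apply/negP => pj.
  by have := before_find 0 pj; rewrite nth_iota // /P add0n edgeN_ord pv.
have := nth_find 0 hasP; rewrite nth_iota // add0n /P.
by case/edgeN_ex => u [<- /pmin].
Qed.

Lemma S_none n (T : {set 'I_n * 'I_n}) (v : 'I_n) :
  (forall u : 'I_n, (u, v) \notin T) -> 0 < v -> S T v = (S T v.-1).+1.
Proof.
move=> none v0; rewrite S_rec; have -> : (v == 0 :> nat) = false by case: (nat_of_ord v) v0.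
have nhas : ~~ has (fun j => edgeN T j v) (iota 0 v).
  apply/hasPn => j _; apply/negP => /edgeN_ex [u [_ h]].
  by move: (none u); rewrite h.
by rewrite /= (hasNfind nhas) size_iota ltnn.
Qed.

Definition exposed n (T : {set 'I_n * 'I_n}) (k v : nat) :=
  forall u w : 'I_n, (u, w) \in T -> w < k -> ~~ ((u < v) && (v < w)).

Lemma exists_minF (I : finType) (P : pred I) (F : I -> nat) (u0 : I) : P u0 ->
  exists p : I, P p /\ (forall u, P u -> F p <= F u).
Proof.
move=> h; case: (arg_minnP F h) => p hp hmin.
by exists p.
Qed.

Lemma exists_min n (P : pred 'I_n) (u0 : 'I_n) : P u0 ->
  exists p : 'I_n, P p /\ (forall u, P u -> p <= u).
Proof. exact: (@exists_minF _ P (fun u : 'I_n => nat_of_ord u)). Qed.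

Lemma claimC n (T : {set 'I_n * 'I_n}) (k : nat) :
  graph_wf T -> noncrossing T ->
  forall m (a a' : 'I_n), a <= m -> a < k -> a' < a -> exposed T k a -> exposed T k a' ->
    (S T a' <= S T a) && ((S T a' < S T a) || connF T k a' a).
Proof.
move=> wf nc; elim=> [|m IH] a a' am ak a'a ea ea'.
  by move: am a'a; rewrite leqn0 => /eqP ->.
case: (boolP [exists u, (u, a) \in T]) => [/existsP [u0 hu0] | /existsPn none].
- have [p [pa pmin]] := @exists_min _ (fun u => (u, a) \in T) _ hu0.
  have pal : p < a by have := wfP wf pa.
  rewrite (S_min wf pa pmin).
  have ep : exposed T k p.
    move=> u w uw wk; apply/negP => /andP[up pw].
    case: (ltngtP w a) => wa.
    + by have := ncP nc uw pa; rewrite /= up pw wa.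
    + by have := ea u w uw wk; rewrite /= (ltn_trans up pal) wa.
    + have wa' : w = a by apply: val_inj.
      by move: (pmin u); rewrite -wa' uw => /(_ isT); rewrite leqNgt up.
  have a'p : a' <= p.
    rewrite leqNgt; apply/negP => pa'.
    by have := ea' p a pa ak; rewrite pa' a'a.
  have pa_conn : connF T k p a.
    by apply: connect1; rewrite /adjF /adj pa (ltn_trans pal ak) ak.
  move: a'p; rewrite leq_eqVlt => /orP[/eqP a'p | a'p].
  + have -> : a' = p by apply: val_inj.
    by rewrite leqnn ltnn pa_conn.
  + have pm : p <= m by move: pal am; lia.
    have := IH p a' pm (ltn_trans pal ak) a'p ep ea'.
    case/andP=> -> /orP[-> // | c]; rewrite orbC.
    by rewrite /connF (connect_trans c pa_conn).
- have a0 : 0 < a by move: a'a; lia.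
  have a1n : a.-1 < n by move: (ltn_ord a); lia.
  set a1 : 'I_n := Ordinal a1n.
  rewrite (S_none none a0).
  have ea1 : exposed T k a1.
    move=> u w uw wk; apply/negP => /andP[up pw].
    case: (ltngtP w a) => wa.
    + by move: pw wa; rewrite /a1 /=; lia.
    + by have := ea u w uw wk; rewrite /= wa andbT; move: up; rewrite /a1 /=; lia.
    + have wa' : w = a by apply: val_inj.
      by move: (none u); rewrite -wa' uw.
  move: a'a; rewrite leq_eqVlt => /orP[/eqP a'a | a'a].
  + have -> : nat_of_ord a' = a.-1 by move: a'a a0; lia.
    by rewrite leqnSn ltnSn.
  + have a1m : a1 <= m by rewrite /a1 /=; move: am; lia.
    have a'a1 : a' < a1 by rewrite /a1 /=; move: a'a; lia.
    have := IH a1 a' a1m _ a'a1 ea1 ea'.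
    have a1k : a1 < k by rewrite /a1 /=; move: ak; lia.
    case/(_ a1k)/andP => h _; rewrite /a1 /= in h.
    by rewrite (leq_trans h (leqnSn _)) ltnS h.
Qed.

Lemma exposed_edge n (T : {set 'I_n * 'I_n}) (p k : 'I_n) :
  noncrossing T -> (p, k) \in T -> exposed T k p.
Proof.
move=> nc pk u w uw wk; apply/negP => /andP[up pw].
by have := ncP nc uw pk; rewrite /= up pw wk.
Qed.

Lemma exposed_agree n (T1 T2 : {set 'I_n * 'I_n}) (k v : nat) :
  agree T1 T2 k -> exposed T1 k v -> exposed T2 k v.
Proof. by move=> ag e u w uw wk; apply: (e u w _ wk); rewrite ag. Qed.

Lemma H_A n (T1 T2 : {set 'I_n * 'I_n}) (k p : 'I_n) :
  graph_wf T1 -> graph_wf T2 -> noncrossing T2 ->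
  (forall v : 'I_n, S T1 v = S T2 v) ->
  (forall u : 'I_n, (u, k) \notin T1) -> (p, k) \in T2 ->
  (forall u : 'I_n, (u, k) \in T2 -> p <= u) -> False.
Proof.
move=> wf1 wf2 nc2 ES none pk pmin.
have pkl : p < k by have := wfP wf2 pk.
have k0 : 0 < k by move: pkl; lia.
have k1n : k.-1 < n by move: (ltn_ord k); lia.
set k1 : 'I_n := Ordinal k1n.
have h1 := S_none none k0.
have h2 := S_min wf2 pk pmin.
have le : S T2 p <= S T2 k1.
  case: (ltngtP p k1) => pk1.
  + have ek1 : exposed T2 k k1.
      by move=> u w _ wk; apply/negP => /andP[_]; rewrite /k1 /=; move: wk; lia.
    have k1k : k1 < k by rewrite /k1 /=; move: k0; lia.
    have := @claimC _ T2 k wf2 nc2 k1 k1 p (leqnn _) k1k pk1 ek1 (exposed_edge nc2 pk).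
    by case/andP.
  + by move: pk1 pkl; rewrite /k1 /=; lia.
  + by have -> : p = k1 by apply: val_inj.
have e1 := ES k; have e2 := ES k1.
move: le; rewrite -h2 -e1 h1 -e2 /k1 /=; lia.
Qed.

Lemma H_B1 n (G T1 T2 : {set 'I_n * 'I_n}) (k p1 p2 : 'I_n) :
  graph_wf T1 -> noncrossing T1 -> graph_wf T2 -> noncrossing T2 -> agree T1 T2 k ->
  (forall v : 'I_n, S T1 v = S T2 v) -> T2 \subset G ->
  ~ (exists s, reducing_seq G T1 s) ->
  (p1, k) \in T1 -> (forall u : 'I_n, (u, k) \in T1 -> p1 <= u) ->
  (p2, k) \in T2 -> (forall u : 'I_n, (u, k) \in T2 -> p2 <= u) -> p1 < p2 -> False.
Proof.
move=> wf1 nc1 wf2 nc2 ag ES sub nred p1k p1min p2k p2min p12.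
case: (boolP (connF T1 k p1 p2)) => c.
  apply: nred; apply: (reduce wf1 nc1 wf2 nc2 ag p1k _ p2k p12 c).
  exact: (subsetP sub).
have p2kl : p2 < k by have := wfP wf2 p2k.
have := @claimC _ T2 k wf2 nc2 p2 p2 p1 (leqnn _) p2kl p12 (exposed_edge nc2 p2k)
  (exposed_agree ag (exposed_edge nc1 p1k)).
rewrite -(connF_agree ag) (negbTE c) orbF => /andP[_].
have e1 := S_min wf1 p1k p1min; have e2 := S_min wf2 p2k p2min.
by rewrite -(ES p1) -e1 (ES k) e2 ltnn.
Qed.

Lemma H_B2 n (G T1 T2 : {set 'I_n * 'I_n}) (k p b : 'I_n) :
  graph_wf T1 -> noncrossing T1 -> connected T1 -> graph_wf T2 -> noncrossing T2 ->
  agree T1 T2 k -> T1 \subset G -> T2 \subset G ->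
  ~ (exists s, reducing_seq G T1 s) -> ~ (exists s, reducing_seq G T2 s) ->
  (p, k) \in T1 -> (forall u : 'I_n, (u, k) \in T2 -> p <= u) ->
  (b, k) \in T2 -> (b, k) \notin T1 -> False.
Proof.
move=> wf1 nc1 con1 wf2 nc2 ag sub1 sub2 nred1 nred2 pk pmin bk bnk.
have pb : p < b.
  rewrite ltn_neqAle pmin // andbT; apply/negP => /eqP pb.
  have pb' : p = b by apply: val_inj.
  by move: bnk; rewrite -pb' pk.
have bkl : b < k by have := wfP wf2 bk.
have [a ak ba] := lemL wf1 nc1 con1 pk pb bkl.
case: (ltngtP a b) => hab.
- apply: nred1; apply: (reduce wf1 nc1 wf2 nc2 ag ak (subsetP sub2 _ bk) bk hab).
  by rewrite connF_sym.
- apply: nred2; apply: (reduce wf2 nc2 wf1 nc1 (agree_sym ag) bk (subsetP sub1 _ ak) ak hab).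
  by rewrite -(connF_agree ag).
- have ab : a = b by apply: val_inj.
  by move: bnk; rewrite -ab ak.
Qed.

Theorem lemma3p12 (n : nat) (G T1 T2 : {set 'I_n * 'I_n}) :
  graph_wf G ->
  noncrossing_tree T1 -> G_reduced G T1 ->
  noncrossing_tree T2 -> G_reduced G T2 ->
  T1 != T2 -> signature T1 != signature T2.
Proof.
move=> Gwf /andP[/and3P[wf1 con1 _] nc1] [sub1 nred1].
move=> /andP[/and3P[wf2 con2 _] nc2] [sub2 nred2] neq.
apply/negP => /eqP Esig.
have ES : forall v : 'I_n, S T1 v = S T2 v.
  move=> v; have := congr1 (fun s => nth 0 s v) Esig.
  by rewrite /signature /= !nth_sig.
have [e0 he0] : exists e, (e \in T1) != (e \in T2).
  case: (boolP [exists e, (e \in T1) != (e \in T2)]) => [/existsP // | /existsPn h].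
  move/eqP: neq; case; apply/setP => e; apply/eqP.
  by move: (h e); rewrite negbK.
have [[u1 k] [/= he emin]] := @exists_minF _ (fun e => (e \in T1) != (e \in T2))
  (fun e : 'I_n * 'I_n => nat_of_ord e.2) e0 he0.
have ag : agree T1 T2 k.
  move=> u v vk; case: (boolP (((u, v) \in T1) == ((u, v) \in T2))) => [/eqP // | hne].
  by have := emin (u, v) hne; rewrite /= leqNgt vk.
have ES' : forall v : 'I_n, S T2 v = S T1 v by move=> v; rewrite ES.
case: (boolP [exists u, (u, k) \in T1]) => [/existsP [x1 hx1] | /existsPn n1];
case: (boolP [exists u, (u, k) \in T2]) => [/existsP [x2 hx2] | /existsPn n2].
- have [p1 [p1k p1min]] := @exists_min _ (fun u => (u, k) \in T1) _ hx1.
  have [p2 [p2k p2min]] := @exists_min _ (fun u => (u, k) \in T2) _ hx2.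
  case: (ltngtP p1 p2) => p12.
  + exact: (H_B1 wf1 nc1 wf2 nc2 ag ES sub2 nred1 p1k p1min p2k p2min p12).
  + exact: (H_B1 wf2 nc2 wf1 nc1 (agree_sym ag) ES' sub1 nred2 p2k p2min p1k p1min p12).
  + have pe : p1 = p2 by apply: val_inj.
    move: he; case h1: ((u1, k) \in T1); case h2: ((u1, k) \in T2) => // _.
    * apply: (H_B2 wf2 nc2 con2 wf1 nc1 (agree_sym ag) sub2 sub1 nred2 nred1 p2k _ h1).
        by rewrite -pe.
      by rewrite h2.
    * apply: (H_B2 wf1 nc1 con1 wf2 nc2 ag sub1 sub2 nred1 nred2 p1k _ h2).
        by rewrite pe.
      by rewrite h1.
- have [p1 [p1k p1min]] := @exists_min _ (fun u => (u, k) \in T1) _ hx1.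
  exact: (H_A wf2 wf1 nc1 ES' n2 p1k p1min).
- have [p2 [p2k p2min]] := @exists_min _ (fun u => (u, k) \in T2) _ hx2.
  exact: (H_A wf1 wf2 nc2 ES n1 p2k p2min).
- by move: he; rewrite (negbTE (n1 u1)) (negbTE (n2 u1)).
Qed.
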